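(* Let $F:\mathcal{A}\to \mathcal{B}$ be a fully faithful (additive) covariant functor between abelian categories, and let $M$ and $N$ be objects of $\mathcal{A}$. (1) Assume that $F$ is left exact. Then $N$ is strongly $M$-Rickart in $\mathcal{A}$ if and only if $F(N)$ is strongly $F(M)$-Rickart in $\mathcal{B}$. (2) Assume that $F$ is right exact. Then $N$ is dual strongly $M$-Rickart in $\mathcal{A}$ if and only if $F(N)$ is dual strongly $F(M)$-Rickart in $\mathcal{B}$.
   Context: A morphism $f:X\to Y$ is a section if $f'f=1_X$ for some $f'$, a retraction if $ff'=1_Y$ for some $f'$. A monomorphism $k:K\to X$ is fully invariant if for every $h:X\to X$ there is $\alpha:K\to K$ with $hk=k\alpha$; an epimorphism $c:X\to C$ is fully coinvariant if for every $h:X\to X$ there is $\gamma:C\to C$ with $ch=\gamma c$. For objects $M,N$: $N$ is strongly $M$-Rickart if the kernel of every morphism $f:M\to N$ is a fully invariant section; $N$ is dual strongly $M$-Rickart if the cokernel of every morphism $f:M\to N$ is a fully coinvariant retraction. *)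

(* Defs.v *)
From HB Require Import structures.
From mathcomp Require Import all_boot all_algebra.
Set Implicit Arguments. Unset Strict Implicit. Unset Printing Implicit Defensive.
Import GRing.Theory.
Local Open Scope ring_scope.

Record cat_data := CatData {
  Ob : Type;
  Hom : Ob -> Ob -> zmodType;
  comp : forall X Y Z : Ob, Hom Y Z -> Hom X Y -> Hom X Z;
  idm : forall X : Ob, Hom X X }.
Arguments comp {c X Y Z}.
Arguments idm {c}.

Section CatDefs.
Variable C : cat_data.
Local Notation "g ∘ f" := (comp g f) (at level 40, left associativity).

Definition is_preadditive : Prop :=
  [/\ (forall (W X Y Z : Ob C) (h : Hom Y Z) (g : Hom X Y) (f : Hom W X),
         h ∘ (g ∘ f) = (h ∘ g) ∘ f),
      (forall (X Y : Ob C) (f : Hom X Y), idm Y ∘ f = f),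
      (forall (X Y : Ob C) (f : Hom X Y), f ∘ idm X = f),
      (forall (X Y Z : Ob C) (g1 g2 : Hom Y Z) (f : Hom X Y),
         (g1 + g2) ∘ f = g1 ∘ f + g2 ∘ f) &
      (forall (X Y Z : Ob C) (g : Hom Y Z) (f1 f2 : Hom X Y),
         g ∘ (f1 + f2) = g ∘ f1 + g ∘ f2)].

Definition is_mono (X Y : Ob C) (f : Hom X Y) : Prop :=
  forall (W : Ob C) (g h : Hom W X), f ∘ g = f ∘ h -> g = h.
Definition is_epi (X Y : Ob C) (f : Hom X Y) : Prop :=
  forall (W : Ob C) (g h : Hom Y W), g ∘ f = h ∘ f -> g = h.

Definition is_kernel (X Y K : Ob C) (f : Hom X Y) (k : Hom K X) : Prop :=
  f ∘ k = 0 /\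
  forall (W : Ob C) (g : Hom W X), f ∘ g = 0 ->
    exists u : Hom W K, k ∘ u = g /\ forall v : Hom W K, k ∘ v = g -> v = u.

Definition is_cokernel (X Y Q : Ob C) (f : Hom X Y) (c : Hom Y Q) : Prop :=
  c ∘ f = 0 /\
  forall (W : Ob C) (g : Hom Y W), g ∘ f = 0 ->
    exists u : Hom Q W, u ∘ c = g /\ forall v : Hom Q W, v ∘ c = g -> v = u.

Definition is_abelian : Prop :=
  [/\ is_preadditive,
      (* zero object *)
      (exists Z : Ob C, idm Z = 0) /\
      (forall X1 X2 : Ob C, exists (P : Ob C) (i1 : Hom X1 P) (i2 : Hom X2 P)
           (p1 : Hom P X1) (p2 : Hom P X2),
           [/\ p1 ∘ i1 = idm X1, p2 ∘ i2 = idm X2, p1 ∘ i2 = 0, p2 ∘ i1 = 0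
             & i1 ∘ p1 + i2 ∘ p2 = idm P]) /\
      (forall (X Y : Ob C) (f : Hom X Y), exists (K : Ob C) (k : Hom K X), is_kernel f k),
      (forall (X Y : Ob C) (f : Hom X Y), exists (Q : Ob C) (c : Hom Y Q), is_cokernel f c),
      (forall (K X : Ob C) (m : Hom K X), is_mono m ->
         exists (Y : Ob C) (f : Hom X Y), is_kernel f m) &
      (forall (Y Q : Ob C) (e : Hom Y Q), is_epi e ->
         exists (X : Ob C) (f : Hom X Y), is_cokernel f e)].

Definition is_section (X Y : Ob C) (f : Hom X Y) : Prop :=
  exists f' : Hom Y X, f' ∘ f = idm X.
Definition is_retraction (X Y : Ob C) (f : Hom X Y) : Prop :=
  exists f' : Hom Y X, f ∘ f' = idm Y.

(* k assumed to be a monomorphism in the paper; here it is a kernel *)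
Definition fully_invariant (K X : Ob C) (k : Hom K X) : Prop :=
  forall h : Hom X X, exists alpha : Hom K K, h ∘ k = k ∘ alpha.
Definition fully_coinvariant (X Q : Ob C) (c : Hom X Q) : Prop :=
  forall h : Hom X X, exists gamma : Hom Q Q, c ∘ h = gamma ∘ c.

(* N is strongly M-Rickart: the kernel of every f : M -> N is a fully
   invariant section (kernels are unique up to iso; we quantify over all) *)
Definition strongly_rickart (M N : Ob C) : Prop :=
  forall (f : Hom M N) (K : Ob C) (k : Hom K M),
    is_kernel f k -> is_section k /\ fully_invariant k.

Definition dual_strongly_rickart (M N : Ob C) : Prop :=
  forall (f : Hom M N) (Q : Ob C) (c : Hom N Q),
    is_cokernel f c -> is_retraction c /\ fully_coinvariant c.

End CatDefs.

Record abcat := AbCat { acat :> cat_data; acat_ax : is_abelian acat }.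

Record functor_data (A B : cat_data) := FunctorData {
  Fob : Ob A -> Ob B;
  Fhom : forall X Y : Ob A, Hom X Y -> Hom (Fob X) (Fob Y) }.
Arguments Fhom {A B} f {X Y}.

Section FunctorDefs.
Variables (A B : cat_data) (F : functor_data A B).

Definition is_covariant_functor : Prop :=
  (forall (X Y Z : Ob A) (g : Hom Y Z) (f : Hom X Y),
      Fhom F (comp g f) = comp (Fhom F g) (Fhom F f)) /\
  (forall X : Ob A, Fhom F (idm X) = idm (Fob F X)).

Definition is_additive : Prop :=
  forall (X Y : Ob A) (f g : Hom X Y), Fhom F (f + g) = Fhom F f + Fhom F g.

Definition fully_faithful : Prop :=
  forall X Y : Ob A, bijective (@Fhom A B F X Y).

Definition left_exact : Prop :=
  forall (X Y K : Ob A) (f : Hom X Y) (k : Hom K X),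
    is_kernel f k -> is_kernel (Fhom F f) (Fhom F k).
Definition right_exact : Prop :=
  forall (X Y Q : Ob A) (f : Hom X Y) (c : Hom Y Q),
    is_cokernel f c -> is_cokernel (Fhom F f) (Fhom F c).
End FunctorDefs.

(* Main.v *)
Require Import Defs.
From mathcomp Require Import all_boot all_algebra.
Import Defs.
Import GRing.Theory.
Set Implicit Arguments.

Section Aux.
Variable C : cat_data.
Hypothesis HC : is_preadditive C.

Lemma pa_assoc (W X Y Z : Ob C) (h : Hom Y Z) (g : Hom X Y) (f : Hom W X) :
  comp h (comp g f) = comp (comp h g) f.
Proof. by case: HC. Qed.
Lemma pa_idl (X Y : Ob C) (f : Hom X Y) : comp (idm Y) f = f.
Proof. by case: HC. Qed.
Lemma pa_idr (X Y : Ob C) (f : Hom X Y) : comp f (idm X) = f.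
Proof. by case: HC. Qed.

Lemma ker_uniq (X Y K1 K2 : Ob C) (g : Hom X Y) (k1 : Hom K1 X) (k2 : Hom K2 X) :
  is_kernel g k1 -> is_kernel g k2 ->
  exists (u : Hom K1 K2) (v : Hom K2 K1),
    [/\ comp k2 u = k1, comp k1 v = k2 & comp v u = idm K1].
Proof.
move=> [H1 U1] [H2 U2].
have [u [Hu _]] := U2 _ k1 H1.
have [v [Hv _]] := U1 _ k2 H2.
exists u, v; split => //.
have [w [_ Hw]] := U1 _ k1 H1.
rewrite (Hw (comp v u)); last by rewrite pa_assoc Hv Hu.
by rewrite (Hw (idm K1)) // pa_idr.
Qed.

Lemma coker_uniq (X Y Q1 Q2 : Ob C) (g : Hom X Y) (c1 : Hom Y Q1) (c2 : Hom Y Q2) :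
  is_cokernel g c1 -> is_cokernel g c2 ->
  exists (u : Hom Q1 Q2) (v : Hom Q2 Q1),
    [/\ comp u c1 = c2, comp v c2 = c1 & comp v u = idm Q1].
Proof.
move=> [H1 U1] [H2 U2].
have [u [Hu _]] := U1 _ c2 H2.
have [v [Hv _]] := U2 _ c1 H1.
exists u, v; split => //.
have [w [_ Hw]] := U1 _ c1 H1.
rewrite (Hw (comp v u)); last by rewrite -pa_assoc Hu Hv.
by rewrite (Hw (idm Q1)) // pa_idl.
Qed.
End Aux.

Theorem theorem4p1 (A B : abcat) (F : functor_data A B)
  (HF : is_covariant_functor F) (Hadd : is_additive F) (Hff : fully_faithful F)
  (M N : Ob A) :
  (left_exact F ->
     (strongly_rickart M N <-> strongly_rickart (Fob F M) (Fob F N))) /\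
  (right_exact F ->
     (dual_strongly_rickart M N <-> dual_strongly_rickart (Fob F M) (Fob F N))).
Proof.
case: HF => Fc Fi.
have HA : is_preadditive A by case: (acat_ax A).
have HB : is_preadditive B by case: (acat_ax B).
have kerA : forall (X Y : Ob A) (f : Hom X Y), exists (K : Ob A) (k : Hom K X), is_kernel f k.
  by case: (acat_ax A) => _ [_ [_ ?]].
have cokA : forall (X Y : Ob A) (f : Hom X Y), exists (Q : Ob A) (c : Hom Y Q), is_cokernel f c.
  by case: (acat_ax A).
have full : forall (X Y : Ob A) (g : Hom (Fob F X) (Fob F Y)), exists f : Hom X Y, Fhom F f = g.
  move=> X Y g; have [G _ GK] := Hff X Y; by exists (G g).
have faith : forall (X Y : Ob A) (f g : Hom X Y), Fhom F f = Fhom F g -> f = g.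
  move=> X Y f g; exact: (bij_inj (Hff X Y)).
split=> Hex; split.
- move=> HR g K' k' Hk'.
  have [f Hf] := full _ _ g; subst g.
  have [K [k Hk]] := kerA _ _ f.
  have [[r Hr] Hinv] := HR _ _ _ Hk.
  have [u [v [Hu Hv Hvu]]] := ker_uniq HB Hk' (Hex _ _ _ _ _ Hk).
  split.
    exists (comp v (Fhom F r)).
    by rewrite -Hu -(pa_assoc HB) (pa_assoc HB _ _ _ _ (Fhom F r)) -Fc Hr Fi (pa_idl HB) Hvu.
  move=> h; have [h0 Hh] := full _ _ h; subst h.
  have [al Hal] := Hinv h0.
  exists (comp v (comp (Fhom F al) u)).
  rewrite -{1}Hu (pa_assoc HB) -Fc Hal Fc (pa_assoc HB _ _ _ _ (k')) -Hv.
  by rewrite (pa_assoc HB).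
- move=> HR f K k Hk.
  have [[r Hr] Hinv] := HR _ _ _ (Hex _ _ _ _ _ Hk).
  have [r0 Hr0] := full _ _ r; subst r.
  split.
    exists r0; apply: faith; by rewrite Fc Hr Fi.
  move=> h; have [be Hbe] := Hinv (Fhom F h).
  have [al Hal] := full _ _ be; subst be.
  exists al; apply: faith; by rewrite !Fc.
- move=> HR g Q' c' Hc'.
  have [f Hf] := full _ _ g; subst g.
  have [Q [c Hc]] := cokA _ _ f.
  have [[s Hs] Hinv] := HR _ _ _ Hc.
  have [u [v [Hu Hv Hvu]]] := coker_uniq HB Hc' (Hex _ _ _ _ _ Hc).
  split.
    exists (comp (Fhom F s) u).
    rewrite -Hvu (pa_assoc HB) -Hv -(pa_assoc HB _ _ _ _ v) -Fc Hs Fi.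
    by rewrite (pa_idr HB).
  move=> h; have [h0 Hh] := full _ _ h; subst h.
  have [ga Hga] := Hinv h0.
  exists (comp v (comp (Fhom F ga) u)).
  by rewrite -!(pa_assoc HB) Hu -Fc -Hga Fc (pa_assoc HB) Hv.
- move=> HR f Q c Hc.
  have [[s Hs] Hinv] := HR _ _ _ (Hex _ _ _ _ _ Hc).
  have [s0 Hs0] := full _ _ s; subst s.
  split.
    exists s0; apply: faith; by rewrite Fc Hs Fi.
  move=> h; have [be Hbe] := Hinv (Fhom F h).
  have [ga Hga] := full _ _ be; subst be.
  exists ga; apply: faith; by rewrite !Fc.
Qed.
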